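(* Let $D\subset\mathbb{C}^n$ be an indecomposable central hyperplane arrangement of degree $d$, the cone of $Z=Z_1\cup\dots\cup Z_d\subset\mathbb{P}^{n-1}$. Let $k$ be an integer and $I\subset\{1,\dots,d-1\}$ with $|I|=k-1$, and put $Z(I)=\bigcup_{i\in I}Z_i$. Assume $k\ge n$ and $Z(I)\cup Z_d$ is a divisor with normal crossings on $\mathbb{P}^{n-1}$. Then $\dim V(I)'=\binom{k-1}{n-1}$.
   Context: Choose coordinates with $Z_d=\{x_n=0\}$, $Y'=\mathbb{P}^{n-1}\setminus Z_d\cong\mathbb{C}^{n-1}$, let $g_i$ ($i<d$) be a degree-one polynomial defining $Z_i\cap Y'$, $\omega_i=dg_i/g_i$, and let $h^\alpha$ be a formal generator, where $\alpha=(\alpha_i)$ with $\alpha_i=1-\frac kd$ for $i\in I$ and $\alpha_i=-\frac kd$ for $i\in\{1,\dots,d-1\}\setminus I$. $V(I)'$ is the $\mathbb{C}$-vector space of (twisted) rational $(n-1)$-forms on $Y'$ spanned by $\omega_{i_1}\wedge\dots\wedge\omega_{i_{n-1}}h^\alpha$ with $\{i_1,\dots,i_{n-1}\}\subset I$. Indecomposable: no nontrivial decomposition $\mathbb{C}^n=W'\times W''$ with $D$ the union of pull-backs of arrangements on $W',W''$. *)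

(* Defs.v *)
From HB Require Import structures.
From mathcomp Require Import all_boot all_order all_algebra.
From mathcomp Require Import reals.
From mathcomp Require Import complex.

Set Implicit Arguments.
Unset Strict Implicit.
Unset Printing Implicit Defensive.

Import Order.TTheory GRing.Theory Num.Theory.
Local Open Scope ring_scope.

Section Defs.
Variable R : realType.
Local Notation C := R[i].

(* A central hyperplane arrangement in C^n of degree d is given by d linear
   forms L i : 'rV_n (row of coefficients), hyperplane i = ker (L i).
   Paper index i (1 <= i <= d) corresponds to the ordinal i-1 : 'I_d. *)

Definition lform n (l x : 'rV[C]_n) : C := \sum_(j < n) l 0 j * x 0 j.

Definition is_arrangement n d (L : 'I_d -> 'rV[C]_n) : Prop :=
  (forall i, L i != 0) /\
  (forall i j, i != j -> \rank (col_mx (L i) (L j)) = 2%N).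

(* Decomposable: after a linear change of coordinates x = P y,
   C^n = C^p x C^(n-p) with 0 < p < n and each hyperplane is the pull-back
   of a hyperplane of the first or of the second factor. *)
Definition decomposable n d (L : 'I_d -> 'rV[C]_n) : Prop :=
  exists (P : 'M[C]_n) (p : nat),
    [/\ P \in unitmx, (0 < p)%N, (p < n)%N &
      forall i, (forall j : 'I_n, (p <= j)%N -> (L i *m P) 0 j = 0) \/
                (forall j : 'I_n, (j < p)%N -> (L i *m P) 0 j = 0)].

Definition indecomposable n d (L : 'I_d -> 'rV[C]_n) : Prop :=
  ~ decomposable L.

(* Coordinates chosen so that Z_d (ordinal d-1) is {x_n = 0} (ordinal n-1). *)
Definition last_is_xn n d (L : 'I_d -> 'rV[C]_n) : Prop :=
  forall i : 'I_d, val i = d.-1 ->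
    forall j : 'I_n, (L i 0 j != 0) = (val j == n.-1).

(* A union of (distinct) hyperplanes of P^{n-1} indexed by S is a divisor with
   normal crossings iff any at most n of the defining linear forms are
   linearly independent. *)
Definition normal_crossings n d (L : 'I_d -> 'rV[C]_n) (S : {set 'I_d}) : Prop :=
  forall T : {set 'I_d}, T \subset S -> (#|T| <= n)%N ->
    row_free (\matrix_(r < #|T|) L (enum_val r)).

(* Y' = P^{n-1} \ Z_d = {x in C^n : x_n = 1} ~ C^{n-1}, with affine
   coordinates x_1, ..., x_{n-1}. *)
Definition Yprime n (x : 'rV[C]_n) : Prop :=
  forall j : 'I_n, val j = n.-1 -> x 0 j = 1.

(* g_i = restriction of L i to Y', a degree-one polynomial in x_1..x_{n-1};
   dg_i = sum_(c < n-1) (L i)_c dx_c.  For a set S of indices listed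
   increasingly as i_1 < ... < i_{n-1}, the rational (n-1)-form
     omega_{i_1} /\ ... /\ omega_{i_{n-1}} ,  omega_i = dg_i / g_i,
   equals  coef_S(x) dx_1 /\ ... /\ dx_{n-1}  with
     coef_S(x) = det [ (L i_r)_c ]_(r,c < n-1) / prod_(i in S) g_i(x).
   We record a top-degree rational form on Y' by this coefficient. *)
Definition dlog_wedge n d (L : 'I_d -> 'rV[C]_n) (S : {set 'I_d})
    (x : 'rV[C]_n) : C :=
  \det (\matrix_(r < n.-1, c < n.-1)
          (nth 0 (map L (enum S)) r) 0 (widen_ord (leq_pred n) c))
  / \prod_(i in S) lform (L i) x.

(* Linear algebra over C for (rational) functions, compared on a dense open
   set U where they are all regular. *)
Definition in_span (T J : Type) (s : seq J) (U : T -> Prop) (f : J -> T -> C)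
    (h : T -> C) : Prop :=
  exists c : J -> C, forall x, U x -> h x = \sum_(j <- s) c j * f j x.

Definition span_dim (T J : Type) (s : seq J) (U : T -> Prop) (f : J -> T -> C)
    (N : nat) : Prop :=
  exists b : 'I_N -> T -> C,
    [/\ forall r, in_span s U f (b r),
        forall a : 'I_N -> C, (forall x, U x -> \sum_r a r * b r x = 0) ->
          forall r, a r = 0 &
        forall h, in_span s U f h -> in_span (enum 'I_N) U b h].

(* V(I)' (with the common formal factor h^alpha removed): the span of the
   forms omega_{i_1} /\ ... /\ omega_{i_{n-1}} with {i_1..i_{n-1}} in I,
   as functions on Y' \ Z(I). *)
Definition VIprime_dim n d (L : 'I_d -> 'rV[C]_n) (I : {set 'I_d}) (N : nat)
  : Prop :=
  span_dim [seq S : {set 'I_d} <- enum {set 'I_d} | (S \subset I) && (#|S| == n.-1)]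
    (fun x => Yprime x /\ forall i, i \in I -> lform (L i) x != 0)
    (@dlog_wedge n d L) N.

End Defs.

(* Main.v *)
Require Import Defs.
From HB Require Import structures.
From mathcomp Require Import all_boot all_order all_algebra.
From mathcomp Require Import reals complex.
Import Order.TTheory GRing.Theory Num.Theory.
Local Open Scope ring_scope.
Set Implicit Arguments. Unset Strict Implicit.

Section H.
Variable R : realType.
Local Notation C := R[i].
Variables (n d : nat) (L : 'I_d -> 'rV[C]_n).

Definition MT (T : {set 'I_d}) := \matrix_(r < #|T|) L (enum_val r).

Lemma lform_mx (l x : 'rV[C]_n) : lform l x = (x *m l^T) 0 0.
Proof. rewrite /lform mxE; apply: eq_bigr => j _; by rewrite mxE mulrC. Qed.

Lemma solv T : row_free (MT T) ->
  exists sol : ('I_d -> C) -> 'rV[C]_n,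
    forall b i, i \in T -> lform (L i) (sol b) = b i.
Proof.
move=> rf.
have : row_full (MT T)^T by rewrite /row_full mxrank_tr.
case/row_fullP => X HX.
exists (fun b => (\row_(r < #|T|) b (enum_val r)) *m X) => b i iT.
pose r : 'I_#|T| := enum_rank_in iT i.
have <- : enum_val r = i by rewrite /r enum_rankK_in.
have E : ((\row_(r < #|T|) b (enum_val r)) *m X *m (MT T)^T) 0 r = b (enum_val r).
  by rewrite -mulmxA HX mulmx1 mxE.
rewrite -E lform_mx !mxE; apply: eq_big => // j _; rewrite !mxE //.
Qed.

Lemma kerT T : row_free (MT T) -> #|T| = n ->
  forall y : 'rV[C]_n, (forall i, i \in T -> lform (L i) y = 0) -> y = 0.
Proof.
move=> rf cT y Hy.
have : row_full (MT T).
  by rewrite /row_full; move: rf; rewrite /row_free => /eqP ->; rewrite cT.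
case/row_fullP => X HX.
have H0 : MT T *m y^T = 0.
  apply/matrixP => r c; rewrite (ord1 c) [RHS]mxE.
  transitivity (lform (L (enum_val r)) y); last exact: Hy (enum_val r) (enum_valP r).
  rewrite lform_mx !mxE; apply: eq_bigr => j _; by rewrite !mxE mulrC.
have : y^T = 0 by rewrite -[y^T]mul1mx -HX -mulmxA H0 mulmx0.
by move/(congr1 trmx); rewrite trmxK trmx0.
Qed.

End H.
Section H2.
Variable R : realType.
Local Notation C := R[i].
Variables (m d : nat) (L : 'I_d -> 'rV[C]_m.+1) (last : 'I_d).
Hypothesis Hlast : forall j : 'I_m.+1, (L last 0 j != 0) = (val j == m).

Lemma lform_last x : lform (L last) x = L last 0 ord_max * x 0 ord_max.
Proof.
rewrite /lform (bigD1 ord_max) //= big1 ?addr0 // => j hj.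
have : (L last 0 j != 0) = false.
  rewrite Hlast; apply: contraNF hj => /eqP hj; apply/eqP/val_inj; exact: hj.
by move/negbFE/eqP ->; rewrite mul0r.
Qed.

Lemma Llast_nz : L last 0 ord_max != 0.
Proof. by rewrite Hlast. Qed.

Lemma lform_split (l x : 'rV[C]_m.+1) :
  lform l x = \sum_(c < m) l 0 (widen_ord (leq_pred m.+1) c) * x 0 (widen_ord (leq_pred m.+1) c)
              + l 0 ord_max * x 0 ord_max.
Proof.
rewrite /lform big_ord_recr /=; congr (_ + _); apply: eq_bigr => c _.
by have -> : widen_ord (leqnSn m) c = widen_ord (leq_pred m.+1) c by apply: val_inj.
Qed.

Lemma det_nz (S : {set 'I_d}) : row_free (MT L (S :|: [set last])) -> last \notin S -> #|S| = m ->
  \det (\matrix_(r < m, c < m) (nth 0 (map L (enum S)) r) 0 (widen_ord (leq_pred m.+1) c)) != 0.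
Proof.
move=> rf lS cS.
have [sol Hsol] := solv rf.
set s0 := enum S.
have ss0 : size s0 = m by rewrite -cS cardE.
pose b (r : 'I_m) (i : 'I_d) : C := if i == last then 0 else (index i s0 == r)%:R.
pose X := \matrix_(c < m, r < m) sol (b r) 0 (widen_ord (leq_pred m.+1) c).
have Hmax r : sol (b r) 0 ord_max = 0.
  have := Hsol (b r) last; rewrite !inE eqxx orbT => /(_ isT).
  rewrite lform_last /b eqxx => /eqP; rewrite mulf_eq0 (negbTE Llast_nz) /=.
  by move/eqP.
have HM : \matrix_(r < m, c < m) (nth 0 (map L (enum S)) r) 0 (widen_ord (leq_pred m.+1) c) *m X = 1%:M.
  apply/matrixP => r' r; rewrite !mxE.
  have r's : (r' < size s0)%N by rewrite ss0.
  have inS : nth last s0 r' \in S by rewrite -mem_enum mem_nth.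
  have := Hsol (b r) (nth last s0 r'); rewrite inE inS => /(_ isT).
  rewrite lform_split Hmax mulr0 addr0 /b.
  have -> : (nth last s0 r' == last) = false.
    by apply/negbTE; apply: contraNneq lS => <-.
  rewrite index_uniq ?enum_uniq // => <-.
  apply: eq_bigr => c _; rewrite !mxE (nth_map last) //.
have [uM _] := mulmx1_unit HM.
by move: uM; rewrite unitmxE unitfE.
Qed.

End H2.

Lemma poly_all_roots (F : numDomainType) (Q : {poly F}) : (forall t, Q.[t] = 0) -> Q = 0.
Proof.
move=> HQ; apply/eqP; apply: contraT => nQ.
have := @max_poly_roots _ Q [seq j%:R | j <- iota 0 (size Q)] nQ.
rewrite size_map size_iota ltnn; apply.
  by apply/allP => t _; apply/rootP.
rewrite map_inj_uniq ?iota_uniq // => a b /eqP; rewrite eqr_nat => /eqP.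
done.
Qed.

Theorem lemma4p8 (R : realType) (n d k : nat) (L : 'I_d -> 'rV[R[i]]_n)
    (I : {set 'I_d}) :
  (0 < n)%N -> (0 < d)%N ->
  is_arrangement L -> indecomposable L -> last_is_xn L ->
  (forall i, i \in I -> (val i < d.-1)%N) ->
  #|I| = (k - 1)%N ->
  (n <= k)%N ->
  normal_crossings L (I :|: [set i | val i == d.-1]) ->
  VIprime_dim L I 'C(k - 1, n - 1).
Proof.
case: n L => [//|m] L _ d0 _ _ Hxn HI cI _ NC.
have ld : (d.-1 < d)%N by rewrite prednK.
pose last := Ordinal ld.
have lastE : [set i : 'I_d | val i == d.-1] = [set last].
  by apply/setP => i; rewrite !inE.
rewrite lastE in NC.
have Hlast : forall j : 'I_m.+1, (L last 0 j != 0) = (val j == m).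
  by move=> j; rewrite Hxn.
have lI : last \notin I by apply/negP => /HI; rewrite ltnn.
have NCT : forall T : {set 'I_d}, T \subset I :|: [set last] -> (#|T| <= m.+1)%N -> row_free (MT L T).
  by move=> T h1 h2; exact: NC.
have -> : (m.+1 - 1 = m)%N by rewrite subn1.
rewrite /VIprime_dim /span_dim /=.
set s := [seq S <- _ | _].
have su : uniq s by rewrite filter_uniq ?enum_uniq.
have ms S : (S \in s) = (S \subset I) && (#|S| == m) by rewrite mem_filter mem_enum andbT.
have ss : size s = 'C(k - 1, m).
  have /card_uniqP <- := su.
  rewrite -cI -cards_draws; apply: eq_card => S; by rewrite ms inE.
set N := 'C(k - 1, m).
have sumE (F : {set 'I_d} -> R[i]) : \sum_(S <- s) F S = \sum_(j <- enum 'I_N) F (nth set0 s j).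
  rewrite big_enum /= (big_nth set0) big_mkord ss; apply: eq_bigl => j; by rewrite inE.
exists (fun r : 'I_N => dlog_wedge L (nth set0 s r)); split.
- move=> r; exists (fun S => (S == nth set0 s r)%:R) => x Ux.
  have rs : nth set0 s r \in s by apply: mem_nth; rewrite ss.
  rewrite (big_rem _ rs) /= eqxx mul1r big1_seq ?addr0 // => S /andP[_ hS].
  have : S != nth set0 s r by apply: contraTneq hS => ->; rewrite mem_rem_uniqF.
  by move/negbTE ->; rewrite mul0r.
- move=> a Ha r0.
  set S0 := nth set0 s r0.
  have S0s : S0 \in s by apply: mem_nth; rewrite ss.
  move: (S0s); rewrite ms => /andP[S0I /eqP cS0].
  have lS0 : last \notin S0 by apply: contra lI; apply/subsetP.
  have cT0 : #|S0 :|: [set last]| = m.+1 by rewrite setUC cardsU1 lS0 cS0.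
  have rf0 : row_free (MT L (S0 :|: [set last])).
    apply: NCT; last by rewrite cT0.
    by rewrite setUSS.
  have [sol Hsol] := solv rf0.
  set pt := sol (fun i => if i == last then L last 0 ord_max else 0).
  set v := sol (fun i => if i == last then 0 else 1).
  have lT0 : last \in S0 :|: [set last] by rewrite !inE eqxx orbT.
  have iT0 i : i \in S0 -> i \in S0 :|: [set last] by move=> h; rewrite inE h.
  have neql i : i \in S0 -> (i == last) = false.
    by move=> h; apply/negbTE; apply: contraNneq lS0 => <-.
  have pt1 : pt 0 ord_max = 1.
    have := Hsol (fun i => if i == last then L last 0 ord_max else 0) last lT0.
    rewrite (lform_last Hlast) eqxx => h.
    by apply: (mulfI (Llast_nz Hlast)); rewrite mulr1.
  have v0 : v 0 ord_max = 0.
    have := Hsol (fun i => if i == last then 0 else 1) last lT0.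
    rewrite (lform_last Hlast) eqxx => /eqP; rewrite mulf_eq0 (negbTE (Llast_nz Hlast)) /=.
    by move/eqP.
  pose al i := lform (L i) pt.
  pose be i := lform (L i) v.
  have al0 i : i \in S0 -> al i = 0 by move=> h; rewrite /al /pt Hsol ?iT0 // neql.
  have be1 i : i \in S0 -> be i = 1 by move=> h; rewrite /be /v Hsol ?iT0 // neql.
  have alnz i : i \in I -> i \notin S0 -> al i != 0.
    move=> iI iS; apply/eqP => a0.
    have cT : #|S0 :|: [set i]| = m.+1 by rewrite setUC cardsU1 iS cS0.
    have rf : row_free (MT L (S0 :|: [set i])).
      apply: NCT; last by rewrite cT.
      apply/subsetP => j; rewrite !inE => /orP[/(subsetP S0I) -> //|/eqP -> ].
      by rewrite iI.
    have p0 : pt = 0.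
      apply: (kerT rf cT) => j; rewrite !inE => /orP[/al0 // | /eqP -> //].
    by move: pt1; rewrite p0 mxE => /eqP; rewrite eq_sym oner_eq0.
  have lx i t : lform (L i) (pt + t *: v) = al i + be i * t.
    rewrite /al /be /lform mulr_suml -big_split; apply: eq_bigr => j _.
    by rewrite !mxE mulrDr /= mulrCA [t * _]mulrC.
  pose G i : {poly R[i]} := (al i)%:P + (be i)%:P * 'X.
  have GE i t : (G i).[t] = al i + be i * t.
    by rewrite /G hornerD hornerC hornerM hornerC hornerX.
  pose D (S : {set 'I_d}) := \det (\matrix_(r < m, c < m)
          (nth 0 (map L (enum S)) r) 0 (widen_ord (leq_pred m.+1) c)).
  pose P := \sum_(r < N) (a r * D (nth set0 s r)) *: \prod_(i in I | i \notin nth set0 s r) G i.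
  have PE t : P.[t] = \sum_(r < N) a r * D (nth set0 s r) *
                        \prod_(i in I | i \notin nth set0 s r) (al i + be i * t).
    rewrite horner_sum; apply: eq_bigr => r _; rewrite hornerZ horner_prod.
    congr (_ * _); rewrite (eq_bigr _ (fun i _ => GE i t)). reflexivity.
  have sr (r : 'I_N) : nth set0 s r \subset I.
    have : nth set0 s r \in s by apply: mem_nth; rewrite ss.
    by rewrite ms => /andP[].
  have HQ t : (P * \prod_(i in I) G i).[t] = 0.
    rewrite hornerM horner_prod.
    case: (boolP [exists i in I, (al i + be i * t) == 0]) => [/exists_inP [i iI /eqP h]| hn].
      by rewrite (bigD1 i) //= GE h mul0r mulr0.
    have nz i : i \in I -> al i + be i * t != 0.
      move=> iI; apply/negP => h; move/negP: hn; apply; apply/exists_inP; exists i => //.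
    have Ux : Yprime (pt + t *: v) /\ (forall i, i \in I -> lform (L i) (pt + t *: v) != 0).
      split.
        move=> j hj; have -> : j = ord_max by apply: val_inj.
        by rewrite !mxE pt1 v0 mulr0 addr0.
      by move=> i iI; rewrite lx; exact: nz.
    have h := Ha _ Ux.
    suff -> : P.[t] = (\sum_r a r * dlog_wedge L (nth set0 s r) (pt + t *: v)) *
                  \prod_(i in I) (al i + be i * t) by rewrite h !mul0r.
    rewrite PE mulr_suml; apply: eq_bigr => r _.
    rewrite /dlog_wedge (eq_bigr _ (fun i _ => lx i t)).
    rewrite [\prod_(i in I) _](bigID (fun i => i \in nth set0 s r)) /=.
    have -> : \prod_(i in I | i \in nth set0 s r) (al i + be i * t) =
              \prod_(i in nth set0 s r) (al i + be i * t).
      apply: eq_bigl => i; apply/andP/idP => [[] //| h1]; split => //.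
      exact: (subsetP (sr r)).
    have pnz : \prod_(i in nth set0 s r) (al i + be i * t) != 0.
      apply/prodf_neq0 => i h1; apply: nz; exact: (subsetP (sr r)).
    rewrite [RHS]mulrA -(mulrA (a r)) -[in RHS](mulrA (a r)) divfK //.
    by rewrite mulrA.
  have Q0 := poly_all_roots HQ.
  have Gnz i : i \in I -> G i != 0.
    move=> iI; apply/eqP => g0.
    case: (boolP (i \in S0)) => iS.
      have := GE i 1; rewrite g0 horner0 al0 // be1 // add0r mulr1 => /eqP.
      by rewrite eq_sym oner_eq0.
    have := GE i 0; rewrite g0 horner0 mulr0 addr0 => /eqP.
    by rewrite eq_sym (negbTE (alnz i iI iS)).
  have P0 : P = 0.
    have QQ := mulf_eq0 P (\prod_(i in I) G i). 
    move/eqP: Q0; rewrite QQ => /orP[/eqP //|].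
    by move/negP: (introT (prodf_neq0 _ _) Gnz).
  have h := PE 0; rewrite P0 horner0 in h; move/esym: h.
  rewrite (bigD1 r0) //= [X in _ + X]big1 ?addr0.
    move/eqP; rewrite !mulf_eq0 => /orP[/orP[/eqP //|]|].
      by rewrite (negbTE (det_nz Hlast rf0 lS0 cS0)).
    have : \prod_(i in I | i \notin S0) (al i + be i * 0) != 0.
      by apply/prodf_neq0 => i /andP[iI iS]; rewrite mulr0 addr0; exact: alnz.
    by move/negbTE ->.
  move=> r hr.
  have ne : nth set0 s r != S0.
    rewrite /S0 nth_uniq ?ss //; exact: hr.
  have : ~~ (S0 \subset nth set0 s r).
    apply: contra ne => sub; rewrite eq_sym eqEcard sub /=.
    have : nth set0 s r \in s by apply: mem_nth; rewrite ss.
    by rewrite ms cS0 => /andP[_ /eqP ->].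
  case/subsetPn => i iS0 nir.
  rewrite (bigD1 i) /=; last by rewrite nir (subsetP S0I).
  by rewrite al0 // mulr0 addr0 mul0r mulr0.
- move=> h [c Hc]; exists (fun j => c (nth set0 s j)) => x Ux.
  by rewrite Hc // sumE.
Qed.
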